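(* Let $X\subseteq\mathbb{R}^n$ be nonempty, closed and convex; let $F:X\to\mathbb{R}^n$ be $L_F$-Lipschitz continuous and monotone on $X$; let $H:X\to\mathbb{R}^n$ be $L_H$-Lipschitz continuous and monotone on $X$; and assume the solution set $\mathrm{SOL}(\mathrm{SOL}(X,F),H)$ of the bilevel VI is nonempty. Then: (i) For every $x\in X$, $\mathrm{Gap}(x,\mathrm{SOL}(X,F),H)\ge -B_H\,\mathrm{dist}(x,\mathrm{SOL}(X,F))$. In particular, for every $x\in\mathrm{SOL}(X,F)$, $\mathrm{Gap}(x,\mathrm{SOL}(X,F),H)\ge 0$. (ii) In the special case $H=\nabla f$ with $f$ continuously differentiable and convex, for every $x\in X$ we have $f(x)-f(x^* )\ge -\|\nabla f(x^* )\|\,\mathrm{dist}(x,\mathrm{SOL}(X,F))$, where $x^*$ is an optimal solution of $\min\{f(x): x\in\mathrm{SOL}(X,F)\}$. If moreover $f$ is $\mu$-strongly convex, then for every $x\in X$, $\frac{\mu}{2}\|x-x^*\|^2\le f(x)-f(x^* )+\|\nabla f(x^* )\|\,\mathrm{dist}(x,\mathrm{SOL}(X,F))$, where $x^*$ is the unique optimal solution of that problem. (iii) If $\mathrm{VI}(X,F)$ is $\alpha$-weakly sharp of order $\mathcal{M}\ge1$, then for every $x\in X$, $\mathrm{dist}(x,\mathrm{SOL}(X,F))\le \sqrt[\mathcal{M}]{\alpha^{-1}\mathrm{Gap}(x,X,F)}$.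
   Context: For a closed convex set $Y$ and a map $G:Y\to\mathbb{R}^n$, $\mathrm{SOL}(Y,G)=\{x\in Y: G(x)^\top(y-x)\ge0\ \forall y\in Y\}$. The bilevel VI asks to find $x\in\mathrm{SOL}(\mathrm{SOL}(X,F),H)$. The dual gap function is $\mathrm{Gap}(x,Y,G)=\sup_{y\in Y}G(y)^\top(x-y)$ for any $x\in\mathbb{R}^n$ (extended-valued). $\mathrm{dist}(x,Y)=\|x-\Pi_Y[x]\|$ with $\Pi_Y$ the Euclidean projection, $\|\cdot\|$ the Euclidean norm. $B_H=\sup_{x\in\mathrm{SOL}(X,F)}\|H(x)\|$. $\mathrm{VI}(X,F)$ is $\alpha$-weakly sharp of order $\mathcal{M}$ if there are $\alpha>0$, $\mathcal{M}\ge1$ with $F(x^* )^\top(x-x^* )\ge\alpha\,\mathrm{dist}^{\mathcal{M}}(x,\mathrm{SOL}(X,F))$ for all $x\in X$ and all $x^*\in\mathrm{SOL}(X,F)$. *)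

(* Defs.v *)
From HB Require Import structures.
From mathcomp Require Import all_boot all_order all_algebra.
From mathcomp Require Import all_classical all_reals all_analysis.
Set Implicit Arguments. Unset Strict Implicit. Unset Printing Implicit Defensive.
Import Order.TTheory GRing.Theory Num.Theory.
Import numFieldNormedType.Exports.
Local Open Scope classical_set_scope.
Local Open Scope ring_scope.

Definition dot {R : realType} {n : nat} (u v : 'rV[R]_n) : R :=
  \sum_(i < n) u ord0 i * v ord0 i.

Definition enorm {R : realType} {n : nat} (u : 'rV[R]_n) : R :=
  Num.sqrt (dot u u).

Definition Convex_setE {R : realType} {n : nat} (Y : set 'rV[R]_n) : Prop :=
  forall x y (t : R), Y x -> Y y -> 0 <= t <= 1 -> Y (t *: x + (1 - t) *: y).

Definition SOL {R : realType} {n : nat} (Y : set 'rV[R]_n)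
  (G : 'rV[R]_n -> 'rV[R]_n) : set 'rV[R]_n :=
  [set x | Y x /\ forall y, Y y -> 0 <= dot (G x) (y - x)].

Definition Gap {R : realType} {n : nat} (x : 'rV[R]_n) (Y : set 'rV[R]_n)
  (G : 'rV[R]_n -> 'rV[R]_n) : \bar R :=
  ereal_sup [set (dot (G y) (x - y))%:E | y in Y].

(* Euclidean distance to a set: dist(x,Y) = inf_{y in Y} ||x - y||
   (equal to ||x - Pi_Y[x]|| for Y nonempty closed convex) *)
Definition dist {R : realType} {n : nat} (x : 'rV[R]_n) (Y : set 'rV[R]_n) : R :=
  inf [set enorm (x - y) | y in Y].

Definition B_H {R : realType} {n : nat} (X : set 'rV[R]_n)
  (F H : 'rV[R]_n -> 'rV[R]_n) : \bar R :=
  ereal_sup [set (enorm (H x))%:E | x in SOL X F].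

Definition Lipschitz_onE {R : realType} {n : nat} (X : set 'rV[R]_n)
  (G : 'rV[R]_n -> 'rV[R]_n) (L : R) : Prop :=
  forall x y, X x -> X y -> enorm (G x - G y) <= L * enorm (x - y).

Definition Monotone_onE {R : realType} {n : nat} (X : set 'rV[R]_n)
  (G : 'rV[R]_n -> 'rV[R]_n) : Prop :=
  forall x y, X x -> X y -> 0 <= dot (G x - G y) (x - y).

Definition convex_fun {R : realType} {n : nat} (f : 'rV[R]_n -> R) : Prop :=
  forall x y (t : R), 0 <= t <= 1 ->
    f (t *: x + (1 - t) *: y) <= t * f x + (1 - t) * f y.

Definition strongly_convex_fun {R : realType} {n : nat} (mu : R)
  (f : 'rV[R]_n -> R) : Prop :=
  0 < mu /\ forall x y (t : R), 0 <= t <= 1 ->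
    f (t *: x + (1 - t) *: y)
      <= t * f x + (1 - t) * f y - mu / 2 * t * (1 - t) * enorm (x - y) ^+ 2.

Definition is_gradient {R : realType} {n : nat} (f : 'rV[R]_n -> R)
  (H : 'rV[R]_n -> 'rV[R]_n) : Prop :=
  forall x, differentiable f x /\ forall v, 'd f x v = dot (H x) v.

Definition argmin_on {R : realType} {n : nat} (f : 'rV[R]_n -> R)
  (Y : set 'rV[R]_n) (xs : 'rV[R]_n) : Prop :=
  Y xs /\ forall y, Y y -> f xs <= f y.

Definition weakly_sharp {R : realType} {n : nat} (X : set 'rV[R]_n)
  (F : 'rV[R]_n -> 'rV[R]_n) (alpha M : R) : Prop :=
  0 < alpha /\ 1 <= M /\
  forall x xs, X x -> SOL X F xs ->
    alpha * dist x (SOL X F) `^ M <= dot (F xs) (x - xs).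

(* Main.v *)
Require Import Defs.
From HB Require Import structures.
From mathcomp Require Import all_boot all_order all_algebra.
From mathcomp Require Import all_classical all_reals all_analysis.
From mathcomp Require Import ring lra.
Import Order.TTheory GRing.Theory Num.Theory.
Import numFieldNormedType.Exports.
Local Open Scope classical_set_scope.
Local Open Scope ring_scope.
Section DotLemmas.
Variables (R : realType) (n : nat).
Implicit Types (u v w : 'rV[R]_n) (a : R).

Lemma dotC u v : dot u v = dot v u.
Proof. by apply: eq_bigr => i _; rewrite mulrC. Qed.

Lemma dotDl u v w : dot (u + v) w = dot u w + dot v w.
Proof. by rewrite /dot -big_split /=; apply: eq_bigr => i _; rewrite mxE mulrDl. Qed.

Lemma dotDr u v w : dot u (v + w) = dot u v + dot u w.
Proof. by rewrite dotC dotDl !(dotC u). Qed.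

Lemma dotZl a u v : dot (a *: u) v = a * dot u v.
Proof. by rewrite /dot mulr_sumr; apply: eq_bigr => i _; rewrite mxE mulrA. Qed.

Lemma dotZr a u v : dot u (a *: v) = a * dot u v.
Proof. by rewrite dotC dotZl dotC. Qed.

Lemma dotNl u v : dot (- u) v = - dot u v.
Proof. by rewrite -scaleN1r dotZl mulN1r. Qed.

Lemma dotNr u v : dot u (- v) = - dot u v.
Proof. by rewrite -scaleN1r dotZr mulN1r. Qed.

Lemma dotBl u v w : dot (u - v) w = dot u w - dot v w.
Proof. by rewrite dotDl dotNl. Qed.

Lemma dotBr u v w : dot u (v - w) = dot u v - dot u w.
Proof. by rewrite dotDr dotNr. Qed.

Lemma dot0l v : dot 0 v = 0.
Proof. by rewrite -(scale0r (0 : 'rV[R]_n)) dotZl mul0r. Qed.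

Lemma dot0r v : dot v 0 = 0.
Proof. by rewrite dotC dot0l. Qed.

Lemma dot_ge0 u : 0 <= dot u u.
Proof. by apply: sumr_ge0 => i _; rewrite -expr2 sqr_ge0. Qed.

Lemma enorm_ge0 u : 0 <= enorm u.
Proof. exact: sqrtr_ge0. Qed.

Lemma enorm_sq u : enorm u ^+ 2 = dot u u.
Proof. by rewrite sqr_sqrtr // dot_ge0. Qed.

Lemma dot_eq0 u : dot u u = 0 -> u = 0.
Proof.
move=> /eqP; rewrite psumr_eq0; last by move=> i _; rewrite -expr2 sqr_ge0.
move=> /allP H; apply/rowP => i; rewrite mxE.
have := H i (mem_index_enum i); rewrite -expr2 sqrf_eq0 => /eqP.
by rewrite [ord0](ord1 ord0) => ->.
Qed.

Lemma dot_le_sum u v (s : R) : 0 < s -> 2 * dot u v <= s * dot u u + s^-1 * dot v v.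
Proof.
move=> s0.
have := dot_ge0 (s *: u - v).
rewrite dotBl !dotBr !dotZl !dotZr (dotC v u).
move=> h.
have e : s * dot u u + s^-1 * dot v v - 2 * dot u v = s^-1 * (s * (s * dot u u) - s * dot u v - (s * dot u v - dot v v)).
  by field; rewrite gt_eqF.
rewrite -subr_ge0 e; apply: mulr_ge0 => //; by rewrite invr_ge0 ltW.
Qed.

Lemma enorm0 : enorm (0 : 'rV[R]_n) = 0.
Proof. by rewrite /enorm dot0l sqrtr0. Qed.

Lemma CS u v : dot u v <= enorm u * enorm v.
Proof.
have [u0|] := eqVneq (enorm u) 0.
  have : dot u u = 0 by rewrite -enorm_sq u0 expr0n.
  by move/dot_eq0 => ->; rewrite dot0l enorm0 mul0r.
have [v0|] := eqVneq (enorm v) 0.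
  have : dot v v = 0 by rewrite -enorm_sq v0 expr0n.
  by move/dot_eq0 => ->; rewrite dot0r enorm0 mulr0.
move=> vn0 un0.
have a0 : 0 < enorm u by rewrite lt0r un0 enorm_ge0.
have b0 : 0 < enorm v by rewrite lt0r vn0 enorm_ge0.
have := @dot_le_sum u v _ (divr_gt0 b0 a0).
rewrite -!enorm_sq => h.
have e : enorm v / enorm u * enorm u ^+ 2 + (enorm v / enorm u)^-1 * enorm v ^+ 2 = 2 * (enorm u * enorm v).
  by field; rewrite !gt_eqF.
rewrite e in h; rewrite -(ler_pM2l (_ : 0 < 2)) //.
Qed.

Lemma CSN u v : - (enorm u * enorm v) <= dot u v.
Proof.
rewrite lerNl -dotNl.
have -> : enorm u = enorm (- u) by rewrite /enorm dotNl dotNr opprK.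
exact: CS.
Qed.

Lemma enormN u : enorm (- u) = enorm u.
Proof. by rewrite /enorm dotNl dotNr opprK. Qed.

Lemma enormB u v : enorm (u - v) = enorm (v - u).
Proof. by rewrite -enormN opprB. Qed.

Lemma enormZ a u : enorm (a *: u) = `|a| * enorm u.
Proof. by rewrite /enorm dotZl dotZr mulrA sqrtrM ?sqr_ge0 // -expr2 sqrtr_sqr. Qed.


Lemma coord_le u i : `|u ord0 i| <= enorm u.
Proof.
rewrite -(sqrtr_sqr (u ord0 i)) ler_sqrt; last exact: dot_ge0.
rewrite /dot (bigD1 i) //= -expr2 lerDl; apply: sumr_ge0 => j _.
by rewrite -expr2 sqr_ge0.
Qed.

End DotLemmas.
Arguments dotC {R n}.
Arguments dotDl {R n}.
Arguments dotDr {R n}.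
Arguments dotZl {R n}.
Arguments dotZr {R n}.
Arguments dotNl {R n}.
Arguments dotNr {R n}.
Arguments dotBl {R n}.
Arguments dotBr {R n}.
Arguments dot0l {R n}.
Arguments dot0r {R n}.
Arguments dot_ge0 {R n}.
Arguments enorm_ge0 {R n}.
Arguments enorm_sq {R n}.
Arguments dot_eq0 {R n}.
Arguments dot_le_sum {R n}.
Arguments CS {R n}.
Arguments CSN {R n}.
Arguments enormN {R n}.
Arguments enormB {R n}.
Arguments enormZ {R n}.
Arguments coord_le {R n}.
Arguments enorm0 {R n}.

Lemma small_ge0 (R : realType) (a A B : R) :
  (forall e, 0 < e -> exists d, 0 <= d <= e /\ - (A * d + B * d ^+ 2) <= a) -> 0 <= a.
Proof.
move=> H; rewrite leNgt; apply/negP => a0.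
set K := `|A| + `|B| + 1.
have K0 : 0 < K by rewrite /K; have := normr_ge0 A; have := normr_ge0 B; lra.
set e := Num.min 1 (- a / (2 * K)).
have e0 : 0 < e by rewrite /e lt_min ltr01 /= divr_gt0 //; lra.
have [d [/andP [d0 de] h]] := H e e0.
have e1 : e <= 1 by rewrite /e ge_min lexx.
have e2 : e <= - a / (2 * K) by rewrite /e ge_min lexx orbT.
have Ke : K * e <= - a / 2.
  rewrite -(ler_pM2l (_ : 0 < K^-1)) ?invr_gt0 // mulrA mulVf ?gt_eqF // mul1r.
  apply: (le_trans e2); rewrite le_eqVlt; apply/orP; left; apply/eqP.
  by field; rewrite gt_eqF.
have hA : A * d <= `|A| * d by rewrite ler_wpM2r // ler_norm.
have hB : B * d ^+ 2 <= `|B| * d.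
  apply: (le_trans (ler_wpM2r (sqr_ge0 d) (ler_norm B))).
  apply: ler_wpM2l; first exact: normr_ge0.
  rewrite expr2; nra.
have hK : K * d <= K * e by apply: ler_wpM2l => //; apply: ltW.
have : `|A| * d + `|B| * d + d = K * d by rewrite /K; ring.
lra.
Qed.

Lemma le_mul_inf (R : realType) (E : set R) (c A : R) :
  E !=set0 -> (forall e, E e -> 0 <= e) -> 0 <= A ->
  (forall e, E e -> c <= A * e) -> c <= A * inf E.
Proof.
move=> [e0 Ee0] Epos A0 H.
have [Aeq|An0] := eqVneq A 0.
  by subst A; rewrite mul0r; have := H e0 Ee0; rewrite mul0r.
have Ap : 0 < A by rewrite lt0r An0 A0.
rewrite -(ler_pM2l (_ : 0 < A^-1)) ?invr_gt0 // mulrA mulVf // mul1r.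
apply: lb_le_inf; first by exists e0.
move=> e Ee; rewrite -(ler_pM2l Ap) mulrA mulfV // mul1r; exact: H.
Qed.

Section DistLemmas.
Variables (R : realType) (n : nat).
Implicit Types (x y : 'rV[R]_n) (S : set 'rV[R]_n).

Lemma dist_set_ge0 x S e : [set enorm (x - y) | y in S] e -> 0 <= e.
Proof. by move=> [y _ <-]; exact: enorm_ge0. Qed.

Lemma dist_ge0 x S : S !=set0 -> 0 <= dist x S.
Proof.
move=> [y Sy]; apply: lb_le_inf; first by exists (enorm (x - y)), y.
by move=> e; apply: dist_set_ge0.
Qed.

Lemma dist_le x S y : S y -> dist x S <= enorm (x - y).
Proof.
move=> Sy; apply: ge_inf; last by exists y.
by exists 0 => e; apply: dist_set_ge0.
Qed.

Lemma dist_lt x S e : S !=set0 -> dist x S < e -> exists2 y, S y & enorm (x - y) < e.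
Proof.
move=> [y0 Sy0] /inf_lt [|r [y Sy <-] h]; first by exists (enorm (x - y0)), y0.
by exists y.
Qed.

Lemma inf_mul_le x S (c A : R) : S !=set0 -> 0 <= A ->
  (forall y, S y -> c <= A * enorm (x - y)) -> c <= A * dist x S.
Proof.
move=> [y0 Sy0] A0 H; apply: le_mul_inf => //.
- by exists (enorm (x - y0)), y0.
- by move=> e; apply: dist_set_ge0.
- by move=> e [y Sy <-]; apply: H.
Qed.

Lemma entry_le_norm (u : 'rV[R]_n) i : `|u ord0 i| <= `|u|.
Proof. by rewrite [leRHS]/Num.norm /= mx_normrE; apply/bigmax_geP; right => /=; exists (ord0, i). Qed.

Lemma norm_le_entries (u : 'rV[R]_n) M : 0 <= M -> (forall i, `|u ord0 i| <= M) -> `|u| <= M.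
Proof.
move=> M0 H; rewrite [leLHS]/Num.norm /= mx_normrE; apply: bigmax_le => // [[i j]] _ /=.
by rewrite [i](ord1 i); apply: H.
Qed.

Lemma near_enorm x (e : R) : 0 < e -> nbhs x [set z | enorm (x - z) < e].
Proof.
move=> e0; apply/nbhs_ballP.
exists (e / (n.+1)%:R); first by rewrite /= divr_gt0.
move=> z; rewrite mx_norm_ball /ball_ /= => hz.
have hi : forall i, `|(x - z) ord0 i| <= e / (n.+1)%:R.
  by move=> i; apply: ltW; apply: le_lt_trans (entry_le_norm _ _) hz.
have hsq : enorm (x - z) ^+ 2 <= n%:R * (e / (n.+1)%:R) ^+ 2.
  rewrite enorm_sq /dot.
  apply: (@le_trans _ _ (\sum_(i < n) (e / (n.+1)%:R) ^+ 2)).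
    apply: ler_sum => i _; rewrite -expr2 -real_normK ?num_real //.
    apply: lerXn2r; rewrite ?nnegrE ?normr_ge0 //; apply: ltW; apply: divr_gt0 => //; rewrite ltr0n.
  by rewrite sumr_const card_ord mulr_natl.
have hlt : n%:R * (e / (n.+1)%:R) ^+ 2 < e ^+ 2.
  have np : 0 < (n.+1)%:R :> R by rewrite ltr0n.
  rewrite expr_div_n mulrA ltr_pdivrMr ?exprn_gt0 //.
  rewrite mulrC ltr_pM2l ?exprn_gt0 //.
  by rewrite expr2 -natrM ltr_nat mulSn ltn_addr.
have h2 := le_lt_trans hsq hlt.
have h0 := @enorm_ge0 R n (x - z).
rewrite !expr2 in h2; nra.
Qed.

End DistLemmas.
Arguments dist_set_ge0 {R n}.
Arguments dist_ge0 {R n}.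
Arguments dist_le {R n}.
Arguments dist_lt {R n}.
Arguments inf_mul_le {R n}.
Arguments entry_le_norm {R n}.
Arguments norm_le_entries {R n}.
Arguments near_enorm {R n}.

Section SolLemmas.
Variables (R : realType) (n : nat) (X : set 'rV[R]_n) (F : 'rV[R]_n -> 'rV[R]_n) (LF : R).


Lemma lip_dot x z w : Lipschitz_onE X F LF -> X x -> X z ->
  - (LF * enorm (x - z) * enorm w) <= dot (F x - F z) w.
Proof.
move=> L Xx Xz.
have h := CSN (F x - F z) w.
have h' : enorm (F x - F z) * enorm w <= LF * enorm (x - z) * enorm w.
  by apply: ler_wpM2r; [exact: enorm_ge0 | exact: L].
lra.
Qed.


Lemma SOL_closed : closed X -> Lipschitz_onE X F LF -> closed (SOL X F).
Proof.
move=> clX L x clx.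
have Xx : X x.
  apply: clX => B nB; have [y [[Xy _] By]] := clx B nB; by exists y.
split=> // y Xy.
apply: (@small_ge0 _ _ (LF * enorm (y - x) + enorm (F x)) LF) => e e0.
have [z [[Xz Sz] hz]] := clx _ (near_enorm x _ e0).
exists (enorm (x - z)); split.
  by rewrite enorm_ge0 /=; apply: ltW.
have e1 : dot (F x) (y - x) = dot (F z) (y - z) + dot (F x - F z) (y - x)
   + dot (F x - F z) (x - z) + dot (F x) (z - x).
  by rewrite !(dotBl, dotBr); ring.
have h1 := Sz y Xy.
have h2 := lip_dot x z (y - x) L Xx Xz.
have h3 := lip_dot x z (x - z) L Xx Xz.
have h4 := CSN (F x) (z - x).
rewrite enormB in h4.
rewrite e1; lra.
Qed.

Lemma SOL_convex : Convex_setE X -> Lipschitz_onE X F LF -> Monotone_onE X F ->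
  Convex_setE (SOL X F).
Proof.
move=> cX L monF x1 x2 t [X1 s1] [X2 s2] t01.
have /andP [t0 t1] := t01.
set z := t *: x1 + (1 - t) *: x2.
have Xz : X z by apply: cX.
split=> // y Xy.
have key : forall w, X w -> 0 <= dot (F w) (w - z).
  move=> w Xw.
  have h1 : 0 <= dot (F w) (w - x1).
    have := monF w x1 Xw X1; have := s1 w Xw; rewrite dotBl; lra.
  have h2 : 0 <= dot (F w) (w - x2).
    have := monF w x2 Xw X2; have := s2 w Xw; rewrite dotBl; lra.
  have -> : w - z = t *: (w - x1) + (1 - t) *: (w - x2).
    by apply/rowP => i; rewrite !mxE; ring.
  rewrite dotDr !dotZr; apply: addr_ge0; apply: mulr_ge0 => //; lra.
apply: (@small_ge0 _ _ (LF * enorm (y - z) ^+ 2) 0) => e e0.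
set s := Num.min e 1.
have s0 : 0 < s by rewrite /s lt_min e0 ltr01.
have s1' : s <= 1 by rewrite /s ge_min lexx orbT.
have se : s <= e by rewrite /s ge_min lexx.
exists s; split; first by rewrite ltW.
set w := s *: y + (1 - s) *: z.
have Xw : X w by apply: cX => //; rewrite ltW.
have ewz : w - z = s *: (y - z) by apply/rowP => i; rewrite !mxE; ring.
have hw : 0 <= dot (F w) (y - z).
  have := key w Xw; rewrite ewz dotZr => h.
  by rewrite -(pmulr_rge0 _ s0).
have e1 : dot (F z) (y - z) = dot (F w) (y - z) + dot (F z - F w) (y - z).
  by rewrite dotBl; ring.
have h2 := lip_dot z w (y - z) L Xz Xw.
have ezw : enorm (z - w) = s * enorm (y - z).
  by rewrite enormB ewz enormZ ger0_norm // ltW.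
rewrite ezw in h2.
rewrite e1 mul0r addr0.
have -> : LF * enorm (y - z) ^+ 2 * s = LF * (s * enorm (y - z)) * enorm (y - z) by ring.
lra.
Qed.

End SolLemmas.
Arguments SOL_convex {R n X F LF}.
Arguments SOL_closed {R n X F LF}.
Arguments lip_dot {R n X F LF}.
Lemma dir_le (R : realType) n (f : 'rV[R]_n -> R) a v c k :
  differentiable f a ->
  (forall t : R, 0 < t <= 1 -> t^-1 * (f (t *: v + a) - f a) <= c + k * t) ->
  'd f a v <= c.
Proof.
move=> df Hb.
rewrite -deriveE //.
have dv := @diff_derivable _ _ _ f a v df.
set g := fun h : R => h^-1 *: ((f \o shift a) (h *: v) - f a).
have gl : g x @[x --> 0^'] --> 'D_v f a := dv.
have gr : g x @[x --> 0^'+] --> 'D_v f a.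
  exact: cvg_dnbhs_at_right.
have hr : (c + k * x) @[x --> (0:R)^'+] --> c.
  apply: (@cvg_at_right_filter R R (fun x => c + k * x) 0 c).
  suff : (c + k * x) @[x --> (0:R)] --> c + k * 0 by rewrite mulr0 addr0.
  by apply: cvgD; [exact: cvg_cst| apply: cvgM; [exact: cvg_cst|exact: cvg_id]].
have := @ler_cvg_to _ _ _ _ g (fun x => c + k * x) _ _ gr hr; apply.
near=> t.
have t0 : 0 < t by near: t; exact: nbhs_right_gt.
have t1 : t <= 1 by near: t; apply: nbhs_right_le; exact: ltr01.
by rewrite /g /= /shift; have := Hb t; rewrite t0 t1 => /(_ isT).
Unshelve. all: end_near.
Qed.

Lemma dir_ge (R : realType) n (f : 'rV[R]_n -> R) a v c :
  differentiable f a ->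
  (forall t : R, 0 < t <= 1 -> c <= t^-1 * (f (t *: v + a) - f a)) ->
  c <= 'd f a v.
Proof.
move=> df Hb.
rewrite -deriveE //.
have dv := @diff_derivable _ _ _ f a v df.
set g := fun h : R => h^-1 *: ((f \o shift a) (h *: v) - f a).
have gl : g x @[x --> 0^'] --> 'D_v f a := dv.
have gr : g x @[x --> 0^'+] --> 'D_v f a.
  exact: cvg_dnbhs_at_right.
have hr : (fun _ => c) x @[x --> (0:R)^'+] --> c by exact: cvg_cst.
have := @ler_cvg_to _ _ _ _ (fun _ => c) g _ _ hr gr; apply.
near=> t.
have t0 : 0 < t by near: t; exact: nbhs_right_gt.
have t1 : t <= 1 by near: t; apply: nbhs_right_le; exact: ltr01.
by rewrite /g /= /shift; have := Hb t; rewrite t0 t1 => /(_ isT).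
Unshelve. all: end_near.
Qed.

Lemma seg_eq (R : realType) n (x a : 'rV[R]_n) t :
  t *: (x - a) + a = t *: x + (1 - t) *: a.
Proof. by apply/rowP => i; rewrite !mxE; ring. Qed.

Lemma grad_ineq (R : realType) n (f : 'rV[R]_n -> R) H m a x :
  is_gradient f H ->
  (forall x y (t : R), 0 <= t <= 1 ->
    f (t *: x + (1 - t) *: y) <= t * f x + (1 - t) * f y - m * t * (1 - t) * enorm (x - y) ^+ 2) ->
  dot (H a) (x - a) <= f x - f a - m * enorm (x - a) ^+ 2.
Proof.
move=> gf cf; have [df dH] := gf a.
rewrite -dH; apply: (@dir_le _ _ _ _ _ _ (m * enorm (x - a) ^+ 2)) => // t /andP [t0 t1].
rewrite seg_eq ler_pdivrMl //.
have := cf x a t; rewrite ltW // t1 => /(_ isT) h.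
have -> : t * (f x - f a - m * enorm (x - a) ^+ 2 + m * enorm (x - a) ^+ 2 * t) =
  t * f x + (1 - t) * f a - m * t * (1 - t) * enorm (x - a) ^+ 2 - f a by ring.
lra.
Qed.

Lemma first_order (R : realType) n (f : 'rV[R]_n -> R) H S xs y :
  is_gradient f H -> Convex_setE S -> argmin_on f S xs -> S y ->
  0 <= dot (H xs) (y - xs).
Proof.
move=> gf cS [Sxs mn] Sy; have [df dH] := gf xs.
rewrite -dH; apply: dir_ge => // t /andP [t0 t1].
rewrite seg_eq; apply: mulr_ge0; first by rewrite invr_ge0 ltW.
rewrite subr_ge0; apply: mn; apply: cS => //; rewrite t1 andbT; exact: ltW.
Qed.

Theorem lemma3p2 (R : realType) (n : nat) (X : set 'rV[R]_n)
  (F H : 'rV[R]_n -> 'rV[R]_n) (LF LH : R) :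
  X !=set0 -> closed X -> Convex_setE X ->
  Lipschitz_onE X F LF -> Monotone_onE X F ->
  Lipschitz_onE X H LH -> Monotone_onE X H ->
  SOL (SOL X F) H !=set0 ->
  (* (i) *)
  ((forall x, X x ->
      (- (B_H X F H * (dist x (SOL X F))%:E) <= Gap x (SOL X F) H)%E) /\
   (forall x, SOL X F x -> (0 <= Gap x (SOL X F) H)%E)) /\
  (* (ii) *)
  (forall f : 'rV[R]_n -> R,
     is_gradient f H -> continuous H -> convex_fun f ->
     (forall xs x, argmin_on f (SOL X F) xs -> X x ->
        - (enorm (H xs) * dist x (SOL X F)) <= f x - f xs) /\
     (forall mu, strongly_convex_fun mu f ->
        (exists xs, argmin_on f (SOL X F) xs) /\
        (forall xs x, argmin_on f (SOL X F) xs -> X x ->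
           mu / 2 * enorm (x - xs) ^+ 2
             <= f x - f xs + enorm (H xs) * dist x (SOL X F)))) /\
  (* (iii) *)
  (forall alpha M, weakly_sharp X F alpha M ->
     forall x, X x -> forall g : R, Gap x X F = g%:E ->
       dist x (SOL X F) <= (alpha^-1 * g) `^ M^-1).
Proof.
move=> _ clX cX LipF monF LipH monH [xb [[Xxb Sxb'] _]].
have Sxb : SOL X F xb by [].
set S := SOL X F.
have S0 : S !=set0 by exists xb.
have cS : Convex_setE S := SOL_convex cX LipF monF.
have gap_ge : forall (Y : set 'rV[R]_n) G x y, Y y -> ((dot (G y) (x - y))%:E <= Gap x Y G)%E.
  by move=> Y G x y Yy; apply: ereal_sup_ubound; exists y.
have bh_ge : forall y, S y -> ((enorm (H y))%:E <= B_H X F H)%E.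
  by move=> y Sy; apply: ereal_sup_ubound; exists y.
split; [split|split].
- move=> x Xx.
  have d0 := dist_ge0 x S S0.
  case Bq : (B_H X F H) => [b| |].
  + have b0 : 0 <= b.
      have := bh_ge xb Sxb; rewrite Bq lee_fin => h; exact: le_trans (enorm_ge0 _) h.
    have hb : forall y, S y -> enorm (H y) <= b.
      by move=> y Sy; have := bh_ge y Sy; rewrite Bq lee_fin.
    case Gq : (Gap x S H) => [g| |]; last 2 first.
    * exact: leey.
    * by have := gap_ge _ H x xb Sxb; rewrite Gq.
    rewrite -EFinM -EFinN lee_fin.
    suff : - g <= b * dist x S by lra.
    apply: inf_mul_le => // y Sy.
    have hg : dot (H y) (x - y) <= g by rewrite -lee_fin -Gq; apply: gap_ge.
    have h1 := CSN (H y) (x - y).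
    have h2 : enorm (H y) * enorm (x - y) <= b * enorm (x - y).
      by apply: ler_wpM2r; [exact: enorm_ge0 | exact: hb].
    lra.
  + have [dz|dp] := eqVneq (dist x S) 0.
      rewrite dz mule0 oppe0.
      case Gq : (Gap x S H) => [g| |]; last 2 first.
      * exact: leey.
      * by have := gap_ge _ H x xb Sxb; rewrite Gq.
      rewrite lee_fin.
      apply: (@small_ge0 _ _ (enorm (H x)) LH) => e e0.
      have [y Sy hy] : exists2 y, S y & enorm (x - y) < e.
        by apply: dist_lt => //; rewrite dz.
      exists (enorm (x - y)); split; first by rewrite enorm_ge0 ltW.
      have hg : dot (H y) (x - y) <= g by rewrite -lee_fin -Gq; apply: gap_ge.
      have Xy : X y by case: Sy.
      have e1 : dot (H y) (x - y) = dot (H x) (x - y) - dot (H x - H y) (x - y) by rewrite dotBl; ring.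
      have h1 := CSN (H x) (x - y).
      have h2 := CS (H x - H y) (x - y).
      have h3 : enorm (H x - H y) * enorm (x - y) <= LH * enorm (x - y) * enorm (x - y).
        by apply: ler_wpM2r; [exact: enorm_ge0 | exact: LipH].
      rewrite expr2; lra.
    have dpos : 0 < dist x S by rewrite lt0r dp d0.
    by rewrite gt0_mulye ?lte_fin //; exact: leNye.
  + by have := bh_ge xb Sxb; rewrite Bq.
- move=> x Sx; apply: le_trans (gap_ge _ _ x x Sx).
  by rewrite subrr dot0r.
- move=> f gf _ convf.
  have gi : forall m, (forall x y (t : R), 0 <= t <= 1 ->
    f (t *: x + (1 - t) *: y) <= t * f x + (1 - t) * f y - m * t * (1 - t) * enorm (x - y) ^+ 2) ->
    forall xs x, argmin_on f S xs -> X x ->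
    m * enorm (x - xs) ^+ 2 <= f x - f xs + enorm (H xs) * dist x S.
    move=> m cf xs x amin Xx.
    have g1 := @grad_ineq _ _ f H m xs x gf cf.
    have g2 : - (f x - f xs - m * enorm (x - xs) ^+ 2) <= enorm (H xs) * dist x S.
      apply: inf_mul_le => //; first exact: enorm_ge0.
      move=> y Sy.
      have h1 := @first_order _ _ f H S xs y gf cS amin Sy.
      have h2 := CSN (H xs) (x - y).
      have e1 : dot (H xs) (x - xs) = dot (H xs) (x - y) + dot (H xs) (y - xs).
        by rewrite !dotBr; ring.
      lra.
    lra.
  have cf0 : forall x y (t : R), 0 <= t <= 1 ->
    f (t *: x + (1 - t) *: y) <= t * f x + (1 - t) * f y - 0 * t * (1 - t) * enorm (x - y) ^+ 2.
    by move=> x y t t01; rewrite !mul0r subr0; apply: convf.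
  split.
    move=> xs x amin Xx; have := gi 0 cf0 xs x amin Xx; rewrite mul0r; lra.
  move=> mu [mu0 sc]; split; last first.
    by move=> xs x amin Xx; apply: gi.
  have fcont : continuous f by move=> y; exact: differentiable_continuous (gf y).1.
  set c0 := f xb.
  set K := S `&` (f @^-1` [set r | r <= c0]).
  have clK : closed K.
    apply: closedI; first exact: SOL_closed clX LipF.
    apply: preimage_closed; last exact: closed_le.
    by move=> y _; exact: fcont.
  have bK : bounded_set K.
    set Rb := 2 * enorm (H xb) / mu + enorm xb.
    exists Rb; split; first by rewrite num_real.
    move=> M hM y [Sy fy] /=.
    have g1 := @grad_ineq _ _ f H (mu / 2) xb y gf sc.
    have h1 := CSN (H xb) (y - xb).
    have r0 := enorm_ge0 (y - xb).
    have hh := enorm_ge0 (H xb).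
    have hr : enorm (y - xb) <= 2 * enorm (H xb) / mu.
      have e : mu / 2 * enorm (y - xb) ^+ 2 <= enorm (H xb) * enorm (y - xb).
        rewrite /c0 /= in fy; lra.
      rewrite ler_pdivlMr //.
      rewrite expr2 in e; nra.
    apply: le_trans (ltW hM).
    apply: norm_le_entries.
      rewrite /Rb; apply: addr_ge0; last exact: enorm_ge0.
      by apply: divr_ge0; [apply: mulr_ge0 | apply: ltW].
    move=> i.
    have -> : y ord0 i = (y - xb) ord0 i + xb ord0 i by rewrite !mxE subrK.
    apply: le_trans (ler_normD _ _) _.
    rewrite /Rb; apply: lerD; last exact: coord_le.
    exact: le_trans (coord_le _ _) hr.
  have K0 : K !=set0 by exists xb; split => //; rewrite /c0 /=.
  have [c Kc cmin] := compact_EVT_min K0 (bounded_closed_compact bK clK) (continuous_subspaceT (A := K) fcont).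
  rewrite inE in Kc; case: Kc => Sc fc.
  exists c; split => // y Sy.
  have [fy|fy] := leP (f y) c0.
    by apply: cmin; rewrite inE.
  rewrite /= in fc; lra.
- move=> alpha M [a0 [M1 ws]] x Xx g Gq.
  have h1 : alpha * dist x S `^ M <= g.
    apply: le_trans (ws x xb Xx Sxb) _.
    by rewrite -lee_fin -Gq; apply: gap_ge.
  have h2 : dist x S `^ M <= alpha^-1 * g.
    by rewrite -(ler_pM2l a0) mulrA mulfV ?gt_eqF // mul1r.
  have d0 := dist_ge0 x S S0.
  have M0 : 0 < M by lra.
  have -> : dist x S = (dist x S `^ M) `^ M^-1.
    by rewrite -powRrM mulfV ?gt_eqF // powRr1.
  apply: ge0_ler_powR => //.
  - by rewrite invr_ge0 ltW.
  - by rewrite nnegrE powR_ge0.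
  - by rewrite nnegrE; apply: le_trans h2; apply: powR_ge0.
Qed.
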